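(* Let $X\subset\mathbb{Z}^n$, let $1\le u\le n$, and let $d$ be an $\ell_p$ metric on $X$ for some $1\le p\le\infty$, so that $(X,d,c_u)$ is a digital metric space. Let $T:X\to X$ be a map such that for some $\alpha>0$, for all $x,y\in X$, $1\le d(x,y)<u^{1/p}+\alpha$ implies $d(T(x),T(y))<1$. If $X$ is $c_u$-connected, then $T$ is constant.
   Context: For distinct $p,q\in\mathbb{Z}^n$, $p$ and $q$ are $c_u$-adjacent if $|p_i-q_i|=1$ for at most $u$ indices $i$ and $p_j=q_j$ for all other indices $j$. $X$ is $c_u$-connected if the graph on $X$ with edges given by $c_u$-adjacency is connected. The $\ell_p$ metric is $d(x,y)=(\sum_i|x_i-y_i|^p)^{1/p}$ for $1\le p<\infty$ and $\max_i|x_i-y_i|$ for $p=\infty$ (with $u^{1/\infty}=1$). *)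

(* Defs.v *)
From HB Require Import structures.
From mathcomp Require Import all_boot all_order all_algebra.
From mathcomp Require Import reals exp.
Set Implicit Arguments. Unset Strict Implicit. Unset Printing Implicit Defensive.
Import Order.TTheory GRing.Theory Num.Theory.
Local Open Scope ring_scope.

Definition pt (n : nat) := {ffun 'I_n -> int}.

Definition cadj (n u : nat) : rel (pt n) := fun x y =>
  [&& x != y, [forall i, `|x i - y i| <= 1] & (#|[pred i | x i != y i]| <= u)%N].

Definition cconnected (n u : nat) (X : pt n -> Prop) : Prop :=
  forall x y, X x -> X y ->
    exists s : seq (pt n), (forall z, z \in s -> X z) /\ path (cadj u) x s /\ last x s = y.

Inductive pexp (R : realType) := PFin of R | PInf.
Arguments PInf {R}.

Definition valid_pexp (R : realType) (p : pexp R) : Prop :=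
  match p with PFin q => 1 <= q | PInf => True end.

Definition dist_lp (R : realType) (n : nat) (p : pexp R) (x y : pt n) : R :=
  match p with
  | PFin q => (\sum_(i < n) (`|(x i - y i)%:~R| : R) `^ q) `^ q^-1
  | PInf => \big[Num.max/0]_(i < n) (`|(x i - y i)%:~R| : R)
  end.

Definition root_p (R : realType) (p : pexp R) (u : nat) : R :=
  match p with PFin q => (u%:R : R) `^ q^-1 | PInf => 1 end.

(* Main.v *)
Require Import Defs.
From HB Require Import structures.
From mathcomp Require Import all_boot all_order all_algebra.
From mathcomp Require Import reals exp.
Import Order.TTheory GRing.Theory Num.Theory.
Local Open Scope ring_scope.

Lemma norm_ge1 (R : realType) (z : int) : z != 0 -> 1 <= (`|z%:~R| : R).
Proof.
move=> z0; rewrite -intr_norm ler1z.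
by case: z z0 => [[|k]|k].
Qed.

Lemma dist_ge1 (R : realType) n (p : pexp R) (x y : pt n) :
  valid_pexp p -> x != y -> 1 <= dist_lp p x y.
Proof.
move=> vp xy.
have [i xi] : exists i, x i != y i.
  apply/existsP; apply: contraR xy => /existsPn H.
  by apply/eqP/ffunP => i; apply/eqP; have := H i; rewrite negbK.
have t1 : 1 <= (`|(x i - y i)%:~R| : R) by apply: norm_ge1; rewrite subr_eq0.
rewrite /dist_lp; case: p vp => [q|] vp.
  rewrite /valid_pexp in vp.
  have q0 : 0 < q by apply: lt_le_trans ltr01 vp.
  have hs : 1 <= \sum_(j < n) (`|(x j - y j)%:~R| : R) `^ q.
    rewrite (bigD1 i) //=.
    apply: (le_trans t1); apply: (le_trans (le1r_powR t1 vp)).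
    rewrite lerDl; apply: sumr_ge0 => j _; exact: powR_ge0.
  have qi : 0 <= q^-1 by rewrite invr_ge0 ltW.
  have := ler_powR hs qi; rewrite powRr0; exact.
have := le_bigmax 0 (fun j => (`|(x j - y j)%:~R| : R)) i.
exact: le_trans t1.
Qed.

Lemma dist_lt1 (R : realType) n (p : pexp R) (x y : pt n) :
  valid_pexp p -> dist_lp p x y < 1 -> x = y.
Proof.
move=> vp d1; apply/eqP; apply: contraLR d1 => xy.
rewrite -leNgt; exact: dist_ge1.
Qed.

Lemma adj_le (R : realType) n u (p : pexp R) (x y : pt n) :
  valid_pexp p -> cadj u x y -> dist_lp p x y <= root_p p u.
Proof.
move=> vp /and3P[_ /forallP H Hc].
have ti : forall i, (`|(x i - y i)%:~R| : R) = (x i != y i)%:R.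
  move=> i; have := H i; rewrite -intr_norm.
  case: (eqVneq (x i) (y i)) => [->|ne]; first by rewrite subrr.
  have : (x i - y i != 0) by rewrite subr_eq0.
  by case: (x i - y i) => [[|[|k]]|[|k]].
rewrite /dist_lp /root_p; case: p vp => [q|] vp.
  rewrite /valid_pexp in vp.
  have q0 : 0 < q by apply: lt_le_trans ltr01 vp.
  have qi : 0 <= q^-1 by rewrite invr_ge0 ltW.
  apply: (ge0_ler_powR qi).
  - rewrite nnegrE; apply: sumr_ge0 => j _; exact: powR_ge0.
  - by rewrite nnegrE ler0n.
  apply: (@le_trans _ _ (\sum_(j < n) ((x j != y j)%:R : R))).
    apply: ler_sum => j _; rewrite ti; case: (x j != y j).
      by rewrite powR1.
    by rewrite powR0 // gt_eqF.
  rewrite -natr_sum ler_nat.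
  apply: leq_trans Hc.
  rewrite -sum1_card [X in (_ <= X)%N]big_mkcond /=.
  by apply: leq_sum => j _; rewrite inE; case: (x j != y j).
apply/bigmax_leP; split => // i _; rewrite ti.
by case: (x i != y i).
Qed.

Theorem proposition8p5 (R : realType) (n u : nat) (X : pt n -> Prop)
  (p : pexp R) (T : pt n -> pt n) (alpha : R) :
  (1 <= u)%N -> (u <= n)%N -> valid_pexp p ->
  (forall x, X x -> X (T x)) ->
  0 < alpha ->
  (forall x y, X x -> X y ->
     1 <= dist_lp p x y -> dist_lp p x y < root_p p u + alpha ->
     dist_lp p (T x) (T y) < 1) ->
  cconnected u X ->
  forall x y, X x -> X y -> T x = T y.
Proof.
move=> u1 un vp XT a0 HT Hc x y Xx Xy.
have [s [sX [ps ls]]] := Hc x y Xx Xy.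
rewrite -ls; clear ls Xy.
elim: s x Xx ps sX => [//|z s IH] x Xx /= /andP[axz ps] sX.
have Xz : X z by apply: sX; rewrite mem_head.
rewrite -(IH z Xz ps); last by move=> w ws; apply: sX; rewrite inE ws orbT.
apply: (@dist_lt1 _ _ p _ _ vp); apply: HT => //.
  by apply: dist_ge1 => //; case/andP: axz.
apply: le_lt_trans (@adj_le _ _ _ p _ _ vp axz) _.
by rewrite ltrDl.
Qed.
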